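(* Let $G$ be a digraph such that $\mathrm{wcol}_\infty(G)\le c$ for some constant $c$. Then $G$ does not contain a directed path of length greater than $2^c-2$, and every directed topological minor $H$ of $G$ satisfies $|E(H)|/|V(H)|\le 4c$.
   Context: For a linear order $L$ of $V(G)$, $u$ is weakly $r$-reachable from $v$ if there is a directed path of length at most $r$ from $u$ to $v$ or from $v$ to $u$ on which $u$ is the $L$-minimum; $\mathrm{WReach}_r[G,L,v]$ is the set of such $u$; $\mathrm{wcol}_r(G)=\min_L\max_{v}|\mathrm{WReach}_r[G,L,v]|$, and for an $n$-vertex digraph $\mathrm{wcol}_\infty(G)=\mathrm{wcol}_n(G)$. A digraph $H$ is a directed topological minor of $G$ if there is an injective map $\delta:V(H)\to V(G)$ and a map sending each arc $(u,v)$ of $H$ to a directed path in $G$ from $\delta(u)$ to $\delta(v)$ that is internally vertex-disjoint from all $\delta(w)$ and from all other such paths. *)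

(* Defs.v *)
From mathcomp Require Import all_boot all_order all_fingroup.
From mathcomp Require Import boolp.
Set Implicit Arguments. Unset Strict Implicit. Unset Printing Implicit Defensive.

(* A digraph is a finite type V with an arc relation e (arc (x,y) iff e x y). *)

(* A directed path from x to y of length n (number of arcs):
   the vertex sequence x :: p, pairwise distinct, consecutive vertices joined
   by arcs, ending at y, with size p = n. *)
Definition dipath (V : finType) (e : rel V) (x : V) (p : seq V) : bool :=
  path e x p && uniq (x :: p).

(* Linear order on V encoded by a permutation s : position of v is enum_rank (s v). *)
Definition Lkey (V : finType) (s : {perm V}) (v : V) : nat := enum_rank (s v).

Definition wreach_rel (V : finType) (e : rel V) (r : nat) (s : {perm V})
  (v u : V) : Prop :=
  (exists p : seq V, [/\ (size p <= r)%N, dipath e u p, last u p = v &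
       forall w, w \in u :: p -> (Lkey s u <= Lkey s w)%N]) \/
  (exists p : seq V, [/\ (size p <= r)%N, dipath e v p, last v p = u &
       forall w, w \in v :: p -> (Lkey s u <= Lkey s w)%N]).

Definition WReach (V : finType) (e : rel V) (r : nat) (s : {perm V}) (v : V)
  : {set V} := [set u | `[< wreach_rel e r s v u >]].

Definition wcol_for (V : finType) (e : rel V) (r : nat) (s : {perm V}) : nat :=
  \max_(v : V) #|WReach e r s v|.

Definition wcol (V : finType) (e : rel V) (r : nat) : nat :=
  wcol_for e r [arg min_(s < (1%g : {perm V})) wcol_for e r s].

Definition wcol_inf (V : finType) (e : rel V) : nat := wcol e #|V|.

(* (W, eH) is a directed topological minor of (V, e): injective delta, and for
   each arc (a,b) of H an interior vertex sequence q a b so that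
   delta a :: rcons (q a b) (delta b) is a directed path of G, whose interior
   avoids every delta w and the interiors of all other arc paths. *)
Definition dtopminor (W V : finType) (eH : rel W) (e : rel V) : Prop :=
  exists (delta : W -> V) (q : W -> W -> seq V),
    [/\ injective delta,
        (forall a b, eH a b -> dipath e (delta a) (rcons (q a b) (delta b))),
        (forall a b w, eH a b -> delta w \notin q a b) &
        (forall a b a' b' x, eH a b -> eH a' b' -> x \in q a b -> x \in q a' b' ->
            a = a' /\ b = b')].

Definition arcs (W : finType) (eH : rel W) : {set W * W} :=
  [set ab | eH ab.1 ab.2].

(* Main.v *)
Require Import Defs.
From mathcomp Require Import all_boot all_order all_fingroup.
From mathcomp Require Import boolp zify.
Set Implicit Arguments. Unset Strict Implicit. Unset Printing Implicit Defensive.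

Definition Dir (V : finType) (e : rel V) (t : seq V) := sorted e t && uniq t.

Lemma Dir_cat (V : finType) (e : rel V) a b : Dir e (a ++ b) -> Dir e a /\ Dir e b.
Proof.
case/andP => /cat_sorted2 [h1 h2]; rewrite cat_uniq => /and3P[u1 _ u2].
by split; apply/andP; split.
Qed.

Lemma size_Dir (V : finType) (e : rel V) t : Dir e t -> size t <= #|V|.
Proof. by case/andP => _ /card_uniqP <-; apply: max_card. Qed.

Lemma L_fwd (V : finType) (e : rel V) s u p : Dir e (u :: p) ->
  (forall w, w \in u :: p -> Lkey s u <= Lkey s w) ->
  u \in WReach e #|V| s (last u p).
Proof.
move=> D H; rewrite inE; apply/asboolP; left; exists p; split => //.
by have := size_Dir D => /= /ltnW.
Qed.

Lemma L_bwd (V : finType) (e : rel V) s v p : Dir e (v :: p) ->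
  (forall w, w \in v :: p -> Lkey s (last v p) <= Lkey s w) ->
  last v p \in WReach e #|V| s v.
Proof.
move=> D H; rewrite inE; apply/asboolP; right; exists p; split => //.
by have := size_Dir D => /= /ltnW.
Qed.

Lemma claim (V : finType) (e : rel V) s k : forall t, Dir e t -> 2 ^ k <= size t ->
  exists2 v, v \in t &
    k.+1 <= #|[set u | (u \in t) && (u \in WReach e #|V| s v)]|.
Proof.
elim: k => [|k IH] [|x t'] D Hs; first by [].
  2: by move: Hs; rewrite leqNgt expn_gt0.
  exists x; first by rewrite inE eqxx.
  rewrite card_gt0; apply/set0Pn; exists x; rewrite inE mem_head /=.
  by apply: (L_fwd (p := [::])) => //= w; rewrite inE => /eqP ->.
set t := x :: t' in D Hs *.
have [m mt mmin] : exists2 m, m \in t & forall w, w \in t -> Lkey s m <= Lkey s w.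
  by case: (arg_minnP (fun w => Lkey s w) (mem_head x t')) => m; exists m.
have Ht : t = x :: t' by [].
move: D Hs mmin mt; rewrite Ht => D Hs mmin mt.
case/splitPr: mt D Hs mmin => t1 t2 D Hs mmin.
have [D1 D2'] := Dir_cat D.
have [_ D2] := Dir_cat (a := [:: m]) D2'.
have Hun : uniq (t1 ++ m :: t2) by case/andP: D.
have mt1 : m \notin t1.
  by move: Hun; rewrite cat_uniq => /and3P[_ /hasPn H _]; apply: H; rewrite mem_head.
have mt2 : m \notin t2 by move: Hun; rewrite cat_uniq => /and3P[_ _ /andP[]].
rewrite size_cat /= expnS in Hs.
case: (leqP (2 ^ k) (size t1)) => h1.
  have [v vt1 Hc] := IH t1 D1 h1.
  exists v; first by rewrite mem_cat vt1.
  case/splitPr: vt1 D mmin Hc mt1 => a b D mmin Hc mt1.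
  have Et : (a ++ v :: b) ++ m :: t2 = a ++ (v :: rcons b m) ++ t2.
    by rewrite -catA /= -cats1 -catA.
  rewrite Et in D mmin *.
  have [_ Dv] := Dir_cat D; have [Dv' _] := Dir_cat Dv.
  have mW : m \in WReach e #|V| s v.
    have := L_bwd (s := s) Dv'; rewrite last_rcons; apply => w wi.
    by apply: mmin; rewrite !mem_cat wi orbT.
  rewrite -Et in mmin *.
    apply: (@leq_trans #|m |: [set u | (u \in a ++ v :: b) && (u \in WReach e #|V| s v)]|).
    by rewrite cardsU1 inE negb_and mt1 /= add1n ltnS.
  apply: subset_leq_card; apply/subsetP => u; move: mW; rewrite !inE => mW.
  case/orP => [/eqP -> | /andP[ut ->]]; first by rewrite mW mem_cat mem_head orbT.
  by rewrite mem_cat ut.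
have h2 : 2 ^ k <= size t2.
  move: Hs h1; move: (2 ^ k) (size t1) (size t2) => X a b. clear. lia.
have [v vt2 Hc] := IH t2 D2 h2.
exists v; first by rewrite mem_cat inE vt2 !orbT.
case/splitPr: vt2 D mmin Hc mt2 => a b D mmin Hc mt2.
have Et : t1 ++ m :: a ++ v :: b = t1 ++ (m :: rcons a v) ++ b.
  by rewrite /= -cats1 -catA.
rewrite Et in D mmin *.
have [_ Dv] := Dir_cat D; have [Dv' _] := Dir_cat Dv.
have mW : m \in WReach e #|V| s v.
  have := L_fwd (s := s) Dv'; rewrite last_rcons; apply => w wi.
  by apply: mmin; rewrite !mem_cat wi orbT.
rewrite -Et in mmin *.
apply: (@leq_trans #|m |: [set u | (u \in a ++ v :: b) && (u \in WReach e #|V| s v)]|).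
  by rewrite cardsU1 inE (negbTE mt2) /= add1n ltnS.
apply: subset_leq_card; apply/subsetP => u; move: mW; rewrite !inE => mW.
case/orP => [/eqP -> | /andP[ut ->]]; first by rewrite mW mem_cat mem_head orbT.
by rewrite mem_cat inE ut !orbT.
Qed.

Lemma Qcard (V W : finType) (e : rel V) s (delta : W -> V) c :
  (forall v, #|WReach e #|V| s v| <= c) ->
  #|[set ay : W * V | ay.2 \in WReach e #|V| s (delta ay.1)]| <= c * #|W|.
Proof.
move=> Hc.
rewrite -sum1_card.
rewrite (eq_bigl (fun p : W * V => predT p.1 && (p.2 \in WReach e #|V| s (delta p.1)))); last first.
  by move=> [a y]; rewrite inE.
rewrite -(pair_big_dep predT (fun a y => y \in WReach e #|V| s (delta a)) (fun _ _ => 1)) /=.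
apply: leq_trans (_ : \sum_(a : W) c <= _).
  by apply: leq_sum => a _; rewrite sum1_card.
by rewrite sum_nat_const mulnC.
Qed.

Theorem mainTheorem19 (V : finType) (e : rel V) (c : nat) :
  (wcol_inf e <= c)%N ->
  (forall (x : V) (p : seq V), dipath e x p -> (size p + 2 <= 2 ^ c)%N) /\
  (forall (W : finType) (eH : rel W), dtopminor eH e ->
     (#|arcs eH| <= 4 * c * #|W|)%N).
Proof.
rewrite /wcol_inf /wcol.
set s := [arg min_(s < 1%g) wcol_for e #|V| s] => H.
have Hc : forall v, #|WReach e #|V| s v| <= c.
  by move=> v; apply: leq_trans _ H; rewrite /wcol_for; exact: leq_bigmax.
split.
  move=> x p D; rewrite leqNgt; apply/negP => Hs.
  have Hs' : 2 ^ c <= size (x :: p) by rewrite /=; move: Hs; move: (2 ^ c) => X; lia.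
  have [v _ Hv] := claim s D Hs'.
  have Hsub : [set u | (u \in x :: p) && (u \in WReach e #|V| s v)] \subset WReach e #|V| s v.
    by apply/subsetP => u; rewrite inE => /andP[].
  by have := leq_trans Hv (leq_trans (subset_leq_card Hsub) (Hc v)); rewrite ltnn.
move=> W eH [delta [q [inj hp hd hq]]].
pose P := fun a b => delta a :: rcons (q a b) (delta b).
pose m := fun a b => [arg min_(w < delta a | w \in P a b) Lkey s w].
have mP : forall a b, m a b \in P a b /\ forall w, w \in P a b -> Lkey s (m a b) <= Lkey s w.
  move=> a b; rewrite /m; case: arg_minnP => [|w]; first by rewrite mem_head.
  by move=> ? ?; split.
have DP : forall a b, eH a b -> Dir e (P a b) by move=> a b /hp.
have mr : forall a b, m a b != delta a -> m a b \in rcons (q a b) (delta b).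
  move=> a b Hm; have [H1 _] := mP a b; move: H1; rewrite /P inE (negbTE Hm) //.
pose Q := [set ay : W * V | ay.2 \in WReach e #|V| s (delta ay.1)].
have HQ : #|Q| <= c * #|W| := Qcard delta Hc.
pose B := [set ab : W * W | m ab.1 ab.2 == delta ab.1].
have H2 : #|arcs eH :&: B| <= #|Q|.
  rewrite -(card_in_imset (f := fun ab : W * W => (ab.2, delta ab.1))); last first.
    by move=> [a b] [a' b'] _ _ [-> /inj ->].
  apply: subset_leq_card; apply/subsetP => y /imsetP [[a b]].
  rewrite !inE /= => /andP[Hab /eqP Hm] ->.
  have := L_fwd (s := s) (DP a b Hab); rewrite last_rcons inE; apply => w wi.
  by rewrite -Hm; apply: (proj2 (mP a b)).
have H1 : #|arcs eH :\: B| <= #|Q|.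
  have mrr : forall a b, eH a b -> m a b != delta a ->
      m a b \in WReach e #|V| s (delta a).
    move=> a b Hab Hm.
    have [p1 [p2 E]] : exists p1 p2, rcons (q a b) (delta b) = p1 ++ m a b :: p2.
      by case/splitPr: (mr a b Hm) => p1 p2; exists p1, p2.
    have D : Dir e ((delta a :: rcons p1 (m a b)) ++ p2).
      by rewrite cat_cons cat_rcons -E; apply: DP.
    have [D1 _] := Dir_cat D.
    have := L_bwd (s := s) D1; rewrite last_rcons; apply => w wi.
    apply: (proj2 (mP a b)); rewrite /P E -cat_rcons -cat_cons mem_cat wi //.
  have mq : forall a b, eH a b -> m a b != delta a ->
      (m a b \in q a b) \/ (m a b = delta b).
    move=> a b Hab Hm; have := mr a b Hm; rewrite mem_rcons inE.
    by case/orP => [/eqP|]; [right|left].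
  rewrite -(card_in_imset (f := fun ab : W * W => (ab.1, m ab.1 ab.2))); last first.
    move=> [a b] [a' b']; rewrite !inE /= => /andP[Hm Hab] /andP[Hm' Hab'] [Ea].
    subst a' => Em; congr (_, _).
    case: (mq a b Hab Hm) => [i1|e1]; case: (mq a b' Hab' Hm') => [i2|e2].
    - by case: (hq _ _ _ _ _ Hab Hab' i1 (etrans (congr1 (fun x => x \in q a b') Em) i2)).
    - by move: (hd a b b' Hab); rewrite -e2 -Em i1.
    - by move: (hd a b' b Hab'); rewrite -e1 Em i2.
    - by apply: inj; rewrite -e1 -e2.
  apply: subset_leq_card; apply/subsetP => y /imsetP [[a b]].
  rewrite !inE /= => /andP[Hm Hab] ->.
  by have := mrr a b Hab Hm; rewrite inE.
rewrite -(cardsID B (arcs eH)) -[4 * c * _]mulnA.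
move: H1 H2 HQ; move: #|Q| (c * #|W|) #|arcs eH :&: B| #|arcs eH :\: B| => X Y Z1 Z2.
clear; lia.
Qed.
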